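(* Let $\hat D$ be any element of the algebra of operators on $C(P)$ generated by $\hat T_1,\dots,\hat T_n$, and let $\lambda,\mu\in P$ with $\lambda\sim\mu$. If $(\hat Df)(\lambda)=0$ for all $f\in C(P)$, then $(\hat Df)(\mu)=0$ for all $f\in C(P)$.
   Context: Let $R$ be an irreducible reduced crystallographic root system of rank $n$ in a Euclidean space $V$ with inner product $\langle\cdot,\cdot\rangle$, $\alpha^\vee:=2\alpha/\langle\alpha,\alpha\rangle$, weight lattice $P$, positive roots $R^+$ with simple roots $\alpha_1,\dots,\alpha_n$, finite Weyl group $W_0$ acting on $C(P)$ (functions $P\to\mathbb C$) by $(wf)(\lambda)=f(w^{-1}\lambda)$. $A:=\{x\in V:0<\langle x,\alpha^\vee\rangle<1\ \forall \alpha\in R^+\}$, $C:=\{x:\langle x,\alpha^\vee\rangle>0\ \forall\alpha\in R^+\}$. For $1\le j\le n$, $s_j$ is the reflection in $V_j:=\{x:\langle x,\alpha_j^\vee\rangle=0\}$, $q_j\in\mathbb R\setminus\{0\}$ are parameters, and $\hat T_j:=q_j+\chi_j(s_j-1)$ where $\chi_j$ multiplies by $\chi_j(\lambda)=q_j$ if $V_j$ separates $\lambda$ and $A$, $1$ if $\lambda\in V_j$, $q_j^{-1}$ otherwise. For $x\in V$, $W_{0,x}$ is the stabilizer of $x$ in $W_0$. Write $x\sim y$ iff $W_{0,x}=W_{0,y}$ and $x,y$ both lie in the closure of the same Weyl chamber $wC$ for some $w\in W_0$. *)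

(* Defs.v *)
From HB Require Import structures.
From mathcomp Require Import all_boot all_order all_algebra.
From Stdlib Require Import ClassicalEpsilon.
Set Implicit Arguments. Unset Strict Implicit. Unset Printing Implicit Defensive.
Import Order.TTheory GRing.Theory Num.Theory.
Local Open Scope ring_scope.

Section RootSystems.
Variables (C : numClosedFieldType) (n : nat).
Local Notation V := 'rV[C]_n.

(* Euclidean space V = real vectors of C^n with the standard inner product. *)
Definition dot (x y : V) : C := (x *m y^T) 0 0.
Definition coroot (al : V) : V := (2 / dot al al) *: al.
Definition refl (al x : V) : V := x - dot x (coroot al) *: al.
Definition realv (x : V) : Prop := forall i, x 0 i \is Num.real.
Definition is_int (c : C) : Prop := exists z : int, c = z%:~R.

Definition irreducible_rs (R : seq V) : Prop :=
  forall S : V -> Prop,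
    (forall al be, al \in R -> be \in R -> S al -> ~ S be -> dot al be = 0) ->
    (forall al, al \in R -> S al) \/ (forall al, al \in R -> ~ S al).

Definition is_base (R : seq V) (a : 'I_n -> V) : Prop :=
  (forall i, a i \in R) /\ \rank (\matrix_(i < n) a i) = n /\
  (forall al, al \in R -> exists c : 'I_n -> nat,
      al = \sum_i (c i)%:R *: a i \/ al = - \sum_i (c i)%:R *: a i).

Definition root_system (R : seq V) (a : 'I_n -> V) : Prop :=
  (0 < n)%N /\
  (forall al, al \in R -> realv al /\ al != 0) /\
  (forall al be, al \in R -> be \in R -> refl al be \in R) /\
  (forall al be, al \in R -> be \in R -> is_int (dot be (coroot al))) /\
  (forall al (c : C), al \in R -> c *: al \in R -> c = 1 \/ c = -1) /\
  irreducible_rs R /\ is_base R a.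

Definition posroot (R : seq V) (a : 'I_n -> V) (al : V) : Prop :=
  al \in R /\ exists c : 'I_n -> nat, al = \sum_i (c i)%:R *: a i.

Definition inP (R : seq V) (x : V) : Prop :=
  realv x /\ forall al, al \in R -> is_int (dot x (coroot al)).
Definition Pt (R : seq V) := {x : V | inP R x}.
Definition Func (R : seq V) := Pt R -> C.

Definition inA (R : seq V) (a : 'I_n -> V) (x : V) : Prop :=
  realv x /\ forall al, posroot R a al ->
    0 < dot x (coroot al) /\ dot x (coroot al) < 1.

Definition sepA (R : seq V) (a : 'I_n -> V) (j : 'I_n) (x : V) : Prop :=
  forall y, inA R a y -> dot x (coroot (a j)) * dot y (coroot (a j)) < 0.

Definition chi (R : seq V) (a : 'I_n -> V) (q : 'I_n -> C) (j : 'I_n)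
  (l : Pt R) : C :=
  if excluded_middle_informative (sepA R a j (proj1_sig l)) then q j
  else if dot (proj1_sig l) (coroot (a j)) == 0 then 1 else (q j)^-1.

(* (s_j f)(l) = f (s_j^{-1} l) = f (s_j l); the fallback branch is never
   used when R is a root system (P is W_0-stable). *)
Definition sact (R : seq V) (a : 'I_n -> V) (j : 'I_n) (f : Func R) : Func R :=
  fun l =>
    let y := refl (a j) (proj1_sig l) in
    match excluded_middle_informative (inP R y) with
    | left h => f (exist _ y h)
    | right _ => f l
    end.

Definition That (R : seq V) (a : 'I_n -> V) (q : 'I_n -> C) (j : 'I_n)
  (f : Func R) : Func R :=
  fun l => q j * f l + chi a q j l * (sact a j f l - f l).

Inductive in_opalg (R : seq V) (a : 'I_n -> V) (q : 'I_n -> C) :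
  (Func R -> Func R) -> Prop :=
| alg_scal (c : C) : in_opalg a q (fun f l => c * f l)
| alg_T (j : 'I_n) : in_opalg a q (That a q j)
| alg_add D1 D2 : in_opalg a q D1 -> in_opalg a q D2 ->
    in_opalg a q (fun f l => D1 f l + D2 f l)
| alg_mul D1 D2 : in_opalg a q D1 -> in_opalg a q D2 ->
    in_opalg a q (fun f => D1 (D2 f)).

Inductive inW (R : seq V) : (V -> V) -> Prop :=
| W_id : inW R (fun x => x)
| W_refl al w : al \in R -> inW R w -> inW R (fun x => refl al (w x)).

Definition same_stab (R : seq V) (x y : V) : Prop :=
  forall w, inW R w -> (w x = x <-> w y = y).

Definition Cbar (R : seq V) (a : 'I_n -> V) (x : V) : Prop :=
  realv x /\ forall al, posroot R a al -> 0 <= dot x (coroot al).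

Definition in_wCbar (R : seq V) (a : 'I_n -> V) (w : V -> V) (x : V) : Prop :=
  exists z, Cbar R a z /\ x = w z.

Definition sim (R : seq V) (a : 'I_n -> V) (x y : V) : Prop :=
  same_stab R x y /\
  exists w, inW R w /\ in_wCbar R a w x /\ in_wCbar R a w y.

End RootSystems.

(* Main.v *)
Require Import Defs.
From HB Require Import structures.
From mathcomp Require Import all_boot all_order all_algebra.
From Stdlib Require Import ClassicalEpsilon ProofIrrelevance.
Import Order.TTheory GRing.Theory Num.Theory.
Set Implicit Arguments. Unset Strict Implicit.
Local Open Scope ring_scope.

Lemma dotE (C : numClosedFieldType) n (x y : 'rV[C]_n) :
  dot x y = \sum_i x 0 i * y 0 i.
Proof. rewrite /dot !mxE; apply: eq_bigr => i _; by rewrite mxE. Qed.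

Lemma dotBl (C : numClosedFieldType) n (x y z : 'rV[C]_n) :
  dot (x - y) z = dot x z - dot y z.
Proof. rewrite !dotE -sumrB; apply: eq_bigr => i _; by rewrite !mxE mulrBl. Qed.

Lemma dotZl (C : numClosedFieldType) n c (x y : 'rV[C]_n) :
  dot (c *: x) y = c * dot x y.
Proof. rewrite !dotE mulr_sumr; apply: eq_bigr => i _; by rewrite !mxE mulrA. Qed.

Lemma dotC (C : numClosedFieldType) n (x y : 'rV[C]_n) : dot x y = dot y x.
Proof. rewrite !dotE; apply: eq_bigr => i _; by rewrite mulrC. Qed.

Lemma dotBr (C : numClosedFieldType) n (x y z : 'rV[C]_n) :
  dot z (x - y) = dot z x - dot z y.
Proof. by rewrite !(dotC z) dotBl. Qed.

Lemma dotZr (C : numClosedFieldType) n c (x y : 'rV[C]_n) :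
  dot y (c *: x) = c * dot y x.
Proof. by rewrite !(dotC y) dotZl. Qed.

Lemma dotNr (C : numClosedFieldType) n (x y : 'rV[C]_n) :
  dot y (- x) = - dot y x.
Proof. by rewrite -scaleN1r dotZr mulN1r. Qed.

Lemma dot_gt0 (C : numClosedFieldType) n (x : 'rV[C]_n) :
  realv x -> x != 0 -> 0 < dot x x.
Proof.
move=> hr hx; rewrite dotE.
have [k hk] : exists k, x 0 k != 0.
  apply/existsP; apply: contraR hx; rewrite negb_exists => /forallP h.
  apply/eqP/rowP => i; rewrite mxE; move: (h i); by rewrite negbK => /eqP.
have sq : forall i, 0 <= x 0 i * x 0 i.
  move=> i; rewrite -expr2 -real_normK ?hr //; exact: exprn_ge0.
rewrite (bigD1 k) //=; apply: ltr_wpDr.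
- by apply: sumr_ge0 => i _.
- rewrite -expr2 -real_normK ?hr //; apply: exprn_gt0; by rewrite normr_gt0.
Qed.

Lemma coroot_dot (C : numClosedFieldType) n (x al : 'rV[C]_n) :
  dot x (coroot al) = 2 / dot al al * dot x al.
Proof. by rewrite /coroot dotZr. Qed.

From mathcomp Require Import ring.

Lemma dot_self_coroot (C : numClosedFieldType) n (al : 'rV[C]_n) :
  dot al al != 0 -> dot al (coroot al) = 2.
Proof. move=> h; rewrite coroot_dot; by field. Qed.

Lemma refl_coroot (C : numClosedFieldType) n (al x : 'rV[C]_n) :
  dot al al != 0 -> dot (refl al x) (coroot al) = - dot x (coroot al).
Proof.
move=> h; rewrite /refl dotBl dotZl (dot_self_coroot h); ring.
Qed.

Lemma refl_invol (C : numClosedFieldType) n (al x : 'rV[C]_n) :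
  dot al al != 0 -> refl al (refl al x) = x.
Proof.
move=> h; rewrite {1}/refl refl_coroot // /refl scaleNr opprK subrK //.
Qed.

Lemma refl_dot (C : numClosedFieldType) n (al x y : 'rV[C]_n) :
  dot al al != 0 -> dot (refl al x) (refl al y) = dot x y.
Proof.
move=> h; rewrite /refl !dotBl !dotBr !dotZl !dotZr.
rewrite (dotC al y); by field.
Qed.

Lemma refl_fix (C : numClosedFieldType) n (al x : 'rV[C]_n) :
  al != 0 -> (refl al x == x) = (dot x (coroot al) == 0).
Proof.
move=> h; rewrite /refl -subr_eq0 addrAC subrr add0r oppr_eq0 scaler_eq0.
by rewrite (negbTE h) orbF.
Qed.


Lemma rs_N (C : numClosedFieldType) n (R : seq 'rV[C]_n) a al :
  root_system R a -> al \in R -> dot al al != 0.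
Proof.
move=> [_ [hr _]] hal; case: (hr _ hal) => h1 h2.
by rewrite gt_eqF // dot_gt0.
Qed.

Lemma rs_nz (C : numClosedFieldType) n (R : seq 'rV[C]_n) a al :
  root_system R a -> al \in R -> al != 0.
Proof. move=> [_ [hr _]] hal; by case: (hr _ hal). Qed.

Lemma rs_refl (C : numClosedFieldType) n (R : seq 'rV[C]_n) a al be :
  root_system R a -> al \in R -> be \in R -> refl al be \in R.
Proof. move=> [_ [_ [h _]]]; exact: h. Qed.

Lemma is_int_real (C : numClosedFieldType) (c : C) : is_int c -> c \is Num.real.
Proof. move=> [z ->]; exact: realz. Qed.

Lemma inP_refl (C : numClosedFieldType) n (R : seq 'rV[C]_n) a al x :
  root_system R a -> al \in R -> inP R x -> inP R (refl al x).
Proof.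
move=> hR hal [hx1 hx2]; have [_ [hr [_ [hint _]]]] := hR.
split.
- move=> i; rewrite /refl !mxE; apply: rpredB; first exact: hx1.
  apply: rpredM; first exact/is_int_real/hx2.
  by case: (hr _ hal) => h _; apply: h.
- move=> be hbe; rewrite /refl dotBl dotZl.
  have [z1 e1] := hx2 _ hbe; have [z2 e2] := hx2 _ hal.
  have [z3 e3] := hint _ _ hbe hal.
  exists (z1 - z2 * z3); by rewrite e1 e2 e3 rmorphB rmorphM.
Qed.

Lemma inW_comp (C : numClosedFieldType) n (R : seq 'rV[C]_n) w1 w2 :
  inW R w1 -> inW R w2 -> inW R (fun x => w1 (w2 x)).
Proof.
move=> h1 h2; elim: h1 => [|al w hal _ IH] //=.
exact: (W_refl hal IH).
Qed.

Lemma inW_refl1 (C : numClosedFieldType) n (R : seq 'rV[C]_n) al :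
  al \in R -> inW R (fun x => refl al x).
Proof. move=> h; exact: (W_refl h (W_id R)). Qed.

Lemma inW_inv (C : numClosedFieldType) n (R : seq 'rV[C]_n) a w :
  root_system R a -> inW R w ->
  exists w', inW R w' /\ (forall x, w' (w x) = x) /\ (forall x, w (w' x) = x).
Proof.
move=> hR; elim => [|al w0 hal _ [w' [hw' [e1 e2]]]].
- exists (fun x => x); split; [exact: W_id | by []].
- exists (fun x => w' (refl al x)); split; first exact: inW_comp hw' (inW_refl1 hal).
  have hN := rs_N hR hal.
  split => x; by rewrite ?refl_invol ?e1 ?e2 ?refl_invol.
Qed.

Lemma inW_dot (C : numClosedFieldType) n (R : seq 'rV[C]_n) a w x y :
  root_system R a -> inW R w -> dot (w x) (w y) = dot x y.
Proof.
move=> hR; elim => [|al w0 hal _ IH] //=.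
by rewrite refl_dot ?IH // (rs_N hR hal).
Qed.

Lemma inW_R (C : numClosedFieldType) n (R : seq 'rV[C]_n) a w be :
  root_system R a -> inW R w -> be \in R -> w be \in R.
Proof.
move=> hR hw hbe; elim: hw => [|al w0 hal _ IH] //=.
exact: rs_refl hR hal IH.
Qed.

Lemma inW_P (C : numClosedFieldType) n (R : seq 'rV[C]_n) a w x :
  root_system R a -> inW R w -> inP R x -> inP R (w x).
Proof.
move=> hR hw hx; elim: hw => [|al w0 hal _ IH] //=.
exact: inP_refl hR hal IH.
Qed.

Lemma refl_self (C : numClosedFieldType) n (al : 'rV[C]_n) :
  dot al al != 0 -> refl al al = - al.
Proof. move=> h; rewrite /refl dot_self_coroot // scaler_nat; by rewrite mulr2n opprD addNKr. Qed.

Lemma zero_eq (C : numClosedFieldType) n (R : seq 'rV[C]_n) a l m v al :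
  root_system R a -> same_stab R l m -> inW R v -> al \in R ->
  (dot (v l) (coroot al) == 0) = (dot (v m) (coroot al) == 0).
Proof.
move=> hR hs hv hal; have hnz := rs_nz hR hal; have hN := rs_N hR hal.
rewrite -!(refl_fix _ hnz).
have [v' [hv' [e1 e2]]] := inW_inv hR hv.
pose u := fun x => v' (refl al (v x)).
have hu : inW R u by apply: inW_comp hv' (inW_comp (inW_refl1 hal) hv).
have key : forall x, (refl al (v x) == v x) = (u x == x).
  move=> x; apply/eqP/eqP => h.
  - by rewrite /u h e1.
  - by rewrite -{2}h /u e2.
rewrite !key; have := hs u hu; by case=> h1 h2; apply/eqP/eqP.
Qed.

Lemma neg_eq (C : numClosedFieldType) n (R : seq 'rV[C]_n) a l m v al :
  root_system R a -> sim R a l m -> inW R v -> al \in R ->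
  (dot (v l) (coroot al) < 0) = (dot (v m) (coroot al) < 0).
Proof.
move=> hR [hs [w [hw [[z [hz el]] [z' [hz' em]]]]]] hv hal; subst l m.
have hz0 := zero_eq hR hs hv hal.
have hu : inW R (fun x => v (w x)) by exact: inW_comp hv hw.
have [u' [hu' [e1 e2]]] := inW_inv hR hu.
have hdot : forall y, dot (v (w y)) al = dot y (u' al).
  move=> y; rewrite -{1}(e2 al); exact: (inW_dot _ _ hR hu).
have hk : 0 < 2 / dot al al.
  apply: divr_gt0; first by [].
  have [_ [hr _]] := hR; case: (hr _ hal) => h1 h2; exact: dot_gt0.
have hk0 : forall t, (2 / dot al al * t == 0) = (t == 0).
  by move=> t; rewrite mulf_eq0 (gt_eqF hk).
move: hz0; rewrite !coroot_dot !hk0 !hdot !(pmulr_rlt0 _ hk).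
set be := u' al.
have hbe : be \in R by exact: inW_R hR hu' hal.
have [_ [hr [_ [_ [_ [_ [_ [_ hb]]]]]]]] := hR.
have hNb : 0 < dot be be by case: (hr _ hbe) => h1 h2; exact: dot_gt0.
have hkb : 0 < 2 / dot be be by apply: divr_gt0.
have [c [ec|ec]] := hb _ hbe.
- have hp : posroot R a be by split; [|exists c].
  have g1 := proj2 hz _ hp; have g2 := proj2 hz' _ hp.
  rewrite coroot_dot pmulr_rge0 // in g1; rewrite coroot_dot pmulr_rge0 // in g2.
  by move=> _; rewrite (le_gtF g1) (le_gtF g2).
- have hp : posroot R a (- be).
    split; last by exists c; rewrite ec opprK.
    rewrite -refl_self ?gt_eqF //; apply: (rs_refl hR hbe hbe).
  have g1 := proj2 hz _ hp; have g2 := proj2 hz' _ hp.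
  have hNb' : dot (- be) (- be) = dot be be.
    by rewrite -!scaleN1r dotZl dotZr mulrA mulN1r opprK mul1r.
  rewrite coroot_dot hNb' pmulr_rge0 // dotNr oppr_ge0 in g1.
  rewrite coroot_dot hNb' pmulr_rge0 // dotNr oppr_ge0 in g2.
  by rewrite !lt_def g1 g2 !andbT (eq_sym 0) (eq_sym 0 (dot z' be)) => ->.
Qed.

Definition rel (C : numClosedFieldType) n (R : seq 'rV[C]_n) (l m : 'rV[C]_n)
  (x x' : Pt R) :=
  exists v, inW R v /\ proj1_sig x = v l /\ proj1_sig x' = v m.
Arguments rel {C n} R l m x x'.

Lemma posroot_a (C : numClosedFieldType) n (R : seq 'rV[C]_n) a j :
  root_system R a -> posroot R a (a j).
Proof.
move=> [_ [_ [_ [_ [_ [_ [ha _]]]]]]]; split; first exact: ha.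
exists (fun i => nat_of_bool (i == j)).
rewrite (bigD1 j) //= eqxx scale1r big1 ?addr0 // => i /negbTE ->.
by rewrite scale0r.
Qed.

Lemma sepA_iff (C : numClosedFieldType) n (R : seq 'rV[C]_n) a j x :
  root_system R a ->
  sepA R a j x <-> (forall y, inA R a y -> dot x (coroot (a j)) < 0).
Proof.
move=> hR; have hp := posroot_a j hR.
split=> h y hy; have hy0 := proj1 (proj2 hy _ hp); have := h y hy.
- by rewrite pmulr_llt0.
- by move=> h'; rewrite pmulr_llt0.
Qed.

Lemma chi_eq (C : numClosedFieldType) n (R : seq 'rV[C]_n) a q j l m x x' :
  root_system R a -> sim R a l m -> rel R l m x x' ->
  chi a q j x = chi a q j x'.
Proof.
move=> hR hs [v [hv [ex ex']]].
have hal : a j \in R by have [_ [_ [_ [_ [_ [_ [ha _]]]]]]] := hR; exact: ha.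
have E : sepA R a j (proj1_sig x) <-> sepA R a j (proj1_sig x').
  rewrite !sepA_iff // ex ex' (neg_eq hR hs hv hal); by [].
rewrite /chi ex ex' (zero_eq hR (proj1 hs) hv hal) -ex -ex'.
case: excluded_middle_informative => h1; case: excluded_middle_informative => h2 //.
- by exfalso; apply: h2; apply/E.
- by exfalso; apply: h1; apply/E.
Qed.

Lemma sact_eq (C : numClosedFieldType) n (R : seq 'rV[C]_n) a j l m x x'
  (f g : Func R) :
  root_system R a -> rel R l m x x' ->
  (forall y y', rel R l m y y' -> g y = f y') ->
  sact a j g x = sact a j f x'.
Proof.
move=> hR [v [hv [ex ex']]] hfg.
have hal : a j \in R by have [_ [_ [_ [_ [_ [_ [ha _]]]]]]] := hR; exact: ha.
rewrite /sact; case: excluded_middle_informative => h1; case: excluded_middle_informative => h2.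
- apply: hfg; exists (fun t => refl (a j) (v t)); split; first exact: W_refl hal hv.
  by rewrite /= ex ex'.
- by exfalso; apply: h2; apply: inP_refl hR hal (proj2_sig x').
- by exfalso; apply: h1; apply: inP_refl hR hal (proj2_sig x).
- by exfalso; apply: h1; apply: inP_refl hR hal (proj2_sig x).
Qed.

Lemma main_ind (C : numClosedFieldType) n (R : seq 'rV[C]_n) a q l m D :
  root_system R a -> sim R a l m -> in_opalg a q D ->
  forall f g : Func R, (forall y y', rel R l m y y' -> g y = f y') ->
  forall x x', rel R l m x x' -> D g x = D f x'.
Proof.
move=> hR hs; elim => [c|j|D1 D2 _ IH1 _ IH2|D1 D2 _ IH1 _ IH2] f g hfg x x' hx.
- by rewrite (hfg _ _ hx).
- rewrite /That (hfg _ _ hx) (chi_eq q j hR hs hx).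
  by rewrite (sact_eq j hR hx hfg).
- by rewrite (IH1 f g hfg _ _ hx) (IH2 f g hfg _ _ hx).
- apply: IH1 hx; exact: IH2.
Qed.

Lemma rel_fun (C : numClosedFieldType) n (R : seq 'rV[C]_n) a l m y y1 y2 :
  root_system R a -> same_stab R l m -> rel R l m y y1 -> rel R l m y y2 -> y1 = y2.
Proof.
move=> hR hs [v1 [hv1 [e1 e1']]] [v2 [hv2 [e2 e2']]].
have [v2' [hv2' [f1 f2]]] := inW_inv hR hv2.
have hu : inW R (fun x => v2' (v1 x)) by exact: inW_comp hv2' hv1.
have hul : v2' (v1 l) = l by rewrite -e1 e2 f1.
have hum := proj1 (hs _ hu) hul.
have E : proj1_sig y1 = proj1_sig y2 by rewrite e1' e2' -{2}hum f2.
destruct y1 as [p1 h1], y2 as [p2 h2]; simpl in E; subst p2.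
by rewrite (proof_irrelevance _ h1 h2).
Qed.

Theorem mainTheorem2 (C : numClosedFieldType) (n : nat)
  (R : seq 'rV[C]_n) (a : 'I_n -> 'rV[C]_n) (q : 'I_n -> C) :
  root_system R a ->
  (forall j, q j \is Num.real /\ q j != 0) ->
  forall D : Func R -> Func R, @in_opalg C n R a q D ->
  forall l m : Pt R, sim R a (proj1_sig l) (proj1_sig m) ->
  (forall f : Func R, D f l = 0) ->
  forall f : Func R, D f m = 0.
Proof.
move=> hR _ D hD l m hs h0 f.
pose g : Func R := fun y =>
  match excluded_middle_informative (exists y', rel R (proj1_sig l) (proj1_sig m) y y') with
  | left h => f (proj1_sig (constructive_indefinite_description _ h))
  | right _ => 0
  end.
have hfg : forall y y', rel R (proj1_sig l) (proj1_sig m) y y' -> g y = f y'.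
  move=> y y' hy; rewrite /g; case: excluded_middle_informative => h; last first.
    by exfalso; apply: h; exists y'.
  case: constructive_indefinite_description => y1 hy1 /=.
  by rewrite (rel_fun hR (proj1 hs) hy1 hy).
rewrite -(main_ind hR hs hD hfg (x:=l)) //.
by exists (fun x => x); split; [exact: W_id|].
Qed.
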